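(* Let $n\ge5$, $x_1,\dots,x_{n-1}>0$, $\gamma,\delta>0$ with $\gamma\ne1\ne\delta$, $x_0=1$, and let $\mathbf{R}$ be the $n\times n$ matrix with entries $r_{ij}=x_{j-1}/x_{i-1}$ except $r_{12}=\delta x_1$, $r_{21}=1/(\delta x_1)$, $r_{34}=\gamma x_3/x_2$, $r_{43}=x_2/(\gamma x_3)$. Let $\mathbf{w}^{EM}$ be its principal right eigenvector. If $\gamma>1$ and $\delta<1$, then $w_2^{EM}/w_4^{EM}>x_3/x_1$; if $\gamma<1$ and $\delta>1$, then $w_2^{EM}/w_4^{EM}<x_3/x_1$.
   Context: The principal right eigenvector is the positive (Perron) eigenvector belonging to the largest eigenvalue. *)

(* Defs.v *)
From HB Require Import structures.
From mathcomp Require Import all_boot all_order all_algebra.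
Set Implicit Arguments. Unset Strict Implicit. Unset Printing Implicit Defensive.
Import Order.TTheory GRing.Theory Num.Theory.
Local Open Scope ring_scope.

(* Indices are 0-based: paper index k (1..n) is ordinal k-1.
   x : nat -> R with x 0 = 1 playing x_0, and x k = x_k for 1 <= k <= n-1.
   Paper entry r_{ij} = x_{j-1}/x_{i-1} becomes entry (i,j) (0-based) = x j / x i. *)
Definition EMmat (R : realFieldType) (n : nat) (x : nat -> R) (gamma delta : R)
  : 'M[R]_n :=
  \matrix_(i < n, j < n)
    match nat_of_ord i, nat_of_ord j with
    | 0, 1 => delta * x 1%N
    | 1, 0 => (delta * x 1%N)^-1
    | 2, 3 => gamma * x 3%N / x 2%N
    | 3, 2 => x 2%N / (gamma * x 3%N)
    | _, _ => x (nat_of_ord j) / x (nat_of_ord i)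
    end.

(* Main.v *)
Require Import Defs.
From HB Require Import structures.
From mathcomp Require Import all_boot all_order all_algebra.
From mathcomp Require Import ring lra zify.
Import Order.TTheory GRing.Theory Num.Theory.
Local Open Scope ring_scope.

Lemma sum_except (R : realFieldType) n (F G : 'I_n -> R) k :
  (forall j, j != k -> F j = G j) -> \sum_j F j = \sum_j G j + (F k - G k).
Proof.
move=> H; rewrite (bigD1 k) //= [in RHS](bigD1 k) //=.
rewrite (eq_bigr G) => [|j /H //]; lra.
Qed.

Lemma ordneq {m : nat} {j : 'I_m.+1} {k : nat} : (k < m.+1)%N -> j != inord k -> nat_of_ord j <> k.
Proof. move=> hk hj hjk; apply/negP: hj; apply/negPn/eqP/val_inj; rewrite /= inordK //. Qed.

Lemma key (R : realFieldType) (lam S a b t : R) : 1 < lam -> 0 < S -> 0 < t ->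
  lam * a = S + (t - 1) * b -> lam * b = S + (t^-1 - 1) * a ->
  (t < 1 -> S < lam * b) /\ (1 < t -> lam * b < S).
Proof.
move=> hl hS ht E0 E1.
have hP : t * lam * b - t * S - (1 - t) * a = 0.
  have -> : t * lam * b = t * (lam * b) by ring.
  rewrite E1 mulrDr mulrA mulrBr divff ?gt_eqF //; ring.
have Z : (lam^+2 * t + (1-t)^+2) * (lam * b - S) = S * (1-t) * (lam + t - 1).
  have -> : (lam^+2 * t + (1-t)^+2) * (lam * b - S) = S * (1-t) * (lam + t - 1)
     + lam * (lam * (t * lam * b - t * S - (1 - t) * a) + (1-t) * (lam * a - S - (t - 1) * b)) by ring.
  by rewrite hP E0; ring.
have D : 0 < lam^+2 * t + (1-t)^+2.
  have h1 : 0 < lam^+2 * t by apply: mulr_gt0 => //; apply: exprn_gt0; lra.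
  have := sqr_ge0 (1-t); lra.
split=> h.
  have : 0 < S * (1-t) * (lam + t - 1) by rewrite !mulr_gt0 //; lra.
  by rewrite -Z pmulr_rgt0 // subr_gt0.
have : S * (1-t) * (lam + t - 1) < 0.
  rewrite -mulrA pmulr_rlt0 // nmulr_rlt0; lra.
by rewrite -Z pmulr_rlt0 // subr_lt0.
Qed.

Lemma rowgen (R : realFieldType) m (M : 'M[R]_m.+1) (x : nat -> R) (w : 'cV[R]_m.+1) lam
  (i k : 'I_m.+1) c :
  (forall j : 'I_m.+1, 0 < x j) ->
  M *m w = lam *: w ->
  (forall j : 'I_m.+1, j != k -> M i j = x j / x i) -> M i k = c ->
  lam * (x i * w i 0) = \sum_(j < m.+1) (x j * w j 0) + (c * x i - x k) * w k 0.
Proof.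
move=> hx hE hj hk.
have := congr1 (fun A : 'cV[R]_m.+1 => A i 0) hE; rewrite !mxE.
rewrite (@sum_except _ _ _ (fun j => x j * w j 0 / x i) k); last first.
  by move=> j /hj ->; rewrite mulrAC.
rewrite -mulr_suml hk => h.
have hxi : x i != 0 by rewrite gt_eqF.
by rewrite -mulrCA -h; field; by rewrite ?mulf_neq0 ?x1n ?x2n ?x3n ?x4n ?dn ?gn.
Qed.

Theorem mainTheorem19 (R : realFieldType) (n : nat) (x : nat -> R)
  (gamma delta lambda : R) (w : 'cV[R]_n)
  (i1 i3 : 'I_n) :
  (5 <= n)%N ->
  x 0%N = 1 ->
  (forall k, (0 < k < n)%N -> 0 < x k) ->
  0 < gamma -> 0 < delta -> gamma != 1 -> delta != 1 ->
  nat_of_ord i1 = 1%N -> nat_of_ord i3 = 3%N ->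
  (forall i, 0 < w i 0) ->
  EMmat n x gamma delta *m w = lambda *: w ->
  (forall mu, eigenvalue (EMmat n x gamma delta) mu -> mu <= lambda) ->
  ((1 < gamma) -> (delta < 1) -> w i1 0 / w i3 0 > x 3%N / x 1%N) /\
  ((gamma < 1) -> (1 < delta) -> w i1 0 / w i3 0 < x 3%N / x 1%N).
Proof.
case: n w i1 i3 => [|m] w i1 i3; first by [].
move=> hn hx0 hxp hg hd _ _ hi1 hi3 hw hE _.
set M := EMmat m.+1 x gamma delta.
have hxo : forall j : 'I_m.+1, 0 < x j.
  move=> [[|j] hj] /=; first by rewrite hx0.
  by apply: hxp.
pose o k := (@inord m k).
have oK : forall k, (k < m.+1)%N -> nat_of_ord (o k) = k by move=> k hk; rewrite /o inordK.
have h0 : (0 < m.+1)%N by []. have h1 : (1 < m.+1)%N by lia.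
have h2 : (2 < m.+1)%N by lia. have h3 : (3 < m.+1)%N by lia.
have h4 : (4 < m.+1)%N by lia.

have E0 := @rowgen R m M x w lambda (o 0%N) (o 1%N) (delta * x 1%N) hxo hE.
have E1 := @rowgen R m M x w lambda (o 1%N) (o 0%N) (delta * x 1%N)^-1 hxo hE.
have E2 := @rowgen R m M x w lambda (o 2%N) (o 3%N) (gamma * x 3%N / x 2%N) hxo hE.
have E3 := @rowgen R m M x w lambda (o 3%N) (o 2%N) (x 2%N / (gamma * x 3%N)) hxo hE.
have E4 := @rowgen R m M x w lambda (o 4%N) (o 0%N) (x 0%N / x 4%N) hxo hE.
have ent : forall (i k : nat) (j : 'I_m.+1), (i < m.+1)%N -> (k < m.+1)%N ->
   (i == 4)%N || ((i < 4)%N && (k == nth 0 [:: 1; 0; 3; 2] i)%N) ->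
   j != o k -> M (o i) j = x j / x (o i).
  move=> i k j hi hk hik hj; have hne := ordneq hk hj.
  rewrite /M mxE !oK //.
  case: j hj hne => [[|[|[|[|j]]]] hj] /= _ hne;
   move: hik; case: i hi => [|[|[|[|[|i]]]]] //= _; move/eqP=> ?; subst k;
   by [] || (exfalso; exact: hne erefl).
have {E0}E0 := E0 (fun j => ent 0%N 1%N j h0 h1 erefl).
have {E1}E1 := E1 (fun j => ent 1%N 0%N j h1 h0 erefl).
have {E2}E2 := E2 (fun j => ent 2%N 3%N j h2 h3 erefl).
have {E3}E3 := E3 (fun j => ent 3%N 2%N j h3 h2 erefl).
have {E4}E4 := E4 (fun j => ent 4%N 0%N j h4 h0 erefl).
have {E0}E0 := E0 ltac:(by rewrite /M mxE !oK).
have {E1}E1 := E1 ltac:(by rewrite /M mxE !oK).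
have {E2}E2 := E2 ltac:(by rewrite /M mxE !oK).
have {E3}E3 := E3 ltac:(by rewrite /M mxE !oK).
have {E4}E4 := E4 ltac:(by rewrite /M mxE !oK).
rewrite !oK // in E0 E1 E2 E3 E4.
move: E0 E1 E2 E3 E4.
move eS : (\sum_(j < m.+1) (x j * w j 0)) => S E0 E1 E2 E3 E4.
have Hu : forall k, (k < m.+1)%N -> 0 < x k * w (o k) 0.
  by move=> k hk; rewrite -{1}(oK k hk) mulr_gt0.
have x1n : x 1%N != 0 by rewrite -(oK 1%N h1) gt_eqF.
have x2n : x 2%N != 0 by rewrite -(oK 2%N h2) gt_eqF.
have x3n : x 3%N != 0 by rewrite -(oK 3%N h3) gt_eqF.
have x4n : x 4%N != 0 by rewrite -(oK 4%N h4) gt_eqF.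
have dn : delta != 0 by rewrite gt_eqF.
have gn : gamma != 0 by rewrite gt_eqF.
have F0 : lambda * (x 0%N * w (o 0%N) 0) = S + (delta - 1) * (x 1%N * w (o 1%N) 0).
  by rewrite E0 hx0; ring.
have F1 : lambda * (x 1%N * w (o 1%N) 0) = S + (delta^-1 - 1) * (x 0%N * w (o 0%N) 0).
  by rewrite E1 hx0; field; by rewrite ?mulf_neq0 ?x1n ?x2n ?x3n ?x4n ?dn ?gn.
have F2 : lambda * (x 2%N * w (o 2%N) 0) = S + (gamma - 1) * (x 3%N * w (o 3%N) 0).
  by rewrite E2; field; by rewrite ?mulf_neq0 ?x1n ?x2n ?x3n ?x4n ?dn ?gn.
have F3 : lambda * (x 3%N * w (o 3%N) 0) = S + (gamma^-1 - 1) * (x 2%N * w (o 2%N) 0).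
  by rewrite E3; field; by rewrite ?mulf_neq0 ?x1n ?x2n ?x3n ?x4n ?dn ?gn.
have F4 : lambda * (x 4%N * w (o 4%N) 0) = S.
  by rewrite E4; field; by rewrite ?mulf_neq0 ?x1n ?x2n ?x3n ?x4n ?dn ?gn.
have n40 : o 0%N != o 4%N.
  by apply/eqP => /(congr1 val) /=; rewrite !oK.
have SS : x 4%N * w (o 4%N) 0 + x 0%N * w (o 0%N) 0 <= S.
  rewrite -eS (bigD1 (o 4%N)) // (bigD1 (o 0%N)) //= oK // oK // addrA lerDl.
  by apply: sumr_ge0 => j _; rewrite ltW // mulr_gt0.
have Hl : 1 < lambda.
  have := Hu 4%N h4; have := Hu 0%N h0; nra.
have HS : 0 < S by have := Hu 4%N h4; have := Hu 0%N h0; lra.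
have [K1a K1b] := @key _ _ _ _ _ _ Hl HS hd F0 F1.
have [K2a K2b] := @key _ _ _ _ _ _ Hl HS hg F2 F3.
have e1 : i1 = o 1%N by apply: val_inj; rewrite /= oK.
have e3 : i3 = o 3%N by apply: val_inj; rewrite /= oK.
rewrite e1 e3.
have w1 := hw (o 1%N). have w3 := hw (o 3%N).
have xx1 : 0 < x 1%N by rewrite -(oK 1%N h1).
have xx3 : 0 < x 3%N by rewrite -(oK 3%N h3).
have lp : 0 < lambda by lra.
split=> hg1 hd1.
  have h : x 3%N * w (o 3%N) 0 < x 1%N * w (o 1%N) 0.
    by rewrite -(ltr_pM2l lp); have := K1a hd1; have := K2b hg1; lra.
  rewrite ltr_pdivrMr // mulrAC ltr_pdivlMr //; lra.
have h : x 1%N * w (o 1%N) 0 < x 3%N * w (o 3%N) 0.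
  by rewrite -(ltr_pM2l lp); have := K1b hd1; have := K2a hg1; lra.
rewrite ltr_pdivrMr // mulrAC ltr_pdivlMr //; lra.
Qed.
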